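(* Let $\mathbb{B}$ be a complete Boolean algebra. If ${\sf G}^{1}{\sf LC}^{cf}\vdash\Gamma\Rightarrow\Delta$, then for every semi ${\tt D}\mathbb{B}$-valuation $V$, $\inf\{\Box V(A):A\in\Gamma\}\le\sup\{\Diamond V(B):B\in\Delta\}$.
   Context: Calculus: second-order language with no relation or function symbols (first-order variables; for each $n\ge1$ countably many $n$-ary second-order variables; atomic formulas $X^n(t_1,\dots,t_n)$; connectives $\lnot,\lor,\land,\exists x,\forall x,\exists X^n,\forall X^n$). $Tm_0$ is the set of first-order terms, $Tm_1^{(n)}$ the set of $n$-ary abstracts $\lambda\vec x.G(x_1,\dots,x_n)$, and $F(T)$ is substitution of an abstract for a second-order variable (replacing $X(t_1,\dots,t_n)$ by $G(t_1,\dots,t_n)$). Sequents are pairs of finite sets of formulas. ${\sf G}^{1}{\sf LC}^{cf}$ is the cut-free sequent calculus with initial sequents $A,\Gamma\Rightarrow\Delta,A$ ($A$ atomic) and the rules: $(L\lnot)$ $\lnot F,\Gamma\Rightarrow\Delta,F$ / $\lnot F,\Gamma\Rightarrow\Delta$; $(R\lnot)$ $F,\Gamma\Rightarrow\Delta,\lnot F$ / $\Gamma\Rightarrow\Delta,\lnot F$; $(L\lor)$ $F_0,F_0\lor F_1,\Gamma\Rightarrow\Delta$ and $F_1,F_0\lor F_1,\Gamma\Rightarrow\Delta$ / $F_0\lor F_1,\Gamma\Rightarrow\Delta$; $(R\lor)$ $\Gamma\Rightarrow\Delta,F_0\lor F_1,F_i$ / $\Gamma\Rightarrow\Delta,F_0\lor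 F_1$; $(L\land)$ $F_i,F_0\land F_1,\Gamma\Rightarrow\Delta$ / $F_0\land F_1,\Gamma\Rightarrow\Delta$; $(R\land)$ $\Gamma\Rightarrow\Delta,F_0\land F_1,F_0$ and $\Gamma\Rightarrow\Delta,F_0\land F_1,F_1$ / $\Gamma\Rightarrow\Delta,F_0\land F_1$; first- and second-order quantifier rules $(L\exists),(R\forall)$ with eigenvariables not in the conclusion (premise contains $F(a)$ resp. $F(Y)$ together with the major formula) and $(R\exists),(L\forall)$ with premise containing an instance $F(t)$, $t\in Tm_0$, resp. $F(T)$, $T\in Tm_1^{(n)}$, together with the major formula. For a cBa $\mathbb{B}$: ${\tt D}\mathbb{B}=\{(a,b):a\le b\}$, ${\tt a}=(\Box{\tt a},\Diamond{\tt a})$, ${\tt a}\unlhd{\tt b}$ iff $\Box{\tt a}\le\Box{\tt b}$ and $\Diamond{\tt a}\ge\Diamond{\tt b}$, $-{\tt a}=(-\Diamond{\tt a},-\Box{\tt a})$, $\sup_<$ and $\inf_<$ computed componentwise. A semi ${\tt D}\mathbb{B}$-valuation is a map $V$ from formulas to ${\tt D}\mathbb{B}$ such that $V(\lnot F)\unlhd-V(F)$; $V(F_0\lor F_1)\unlhd\sup_<\{V(F_0),V(F_1)\}$; $V(F_0\land F_1)\unlhd\inf_<\{V(F_0),V(F_1)\}$; $V(\exists xF(x))\unlhd\sup_<\{V(F(t)):t\in Tm_0\}$; $V(\forall xF(x))\unlhd\inf_<\{V(F(t)):t\in Tm_0\}$; $V(\exists X^nF(X))\unlhd\sup_<\{V(F(T)):T\in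 Tm_1^{(n)}\}$; $V(\forall X^nF(X))\unlhd\inf_<\{V(F(T)):T\in Tm_1^{(n)}\}$. *)

(* Defs.v *)
From Stdlib Require Import List Arith.
Import ListNotations.

(* First-order variables are natural numbers (de Bruijn indices; an index
   beyond the enclosing first-order binders denotes a free variable).
   Since there are no function symbols, first-order terms = variables.
   A second-order variable of arity n (n >= 1) is a number X; in an atom
   [Atom X t ts] its arity is n = 1 + length ts and X is a de Bruijn index
   counting the enclosing second-order binders OF THE SAME ARITY (beyond
   those, it denotes a free second-order variable of arity n).
   Second-order quantifiers [SEx m F], [SAll m F] bind a variable of arity
   m+1 (so every arity n >= 1 is available and no arity 0 exists). *)
Inductive form : Type :=
| Atom (X : nat) (t : nat) (ts : list nat)
| Neg  (F : form)
| Or   (F0 F1 : form)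
| And  (F0 F1 : form)
| Ex   (F : form)
| All  (F : form)
| SEx  (m : nat) (F : form)
| SAll (m : nat) (F : form).

Definition is_atom (F : form) : Prop :=
  match F with Atom _ _ _ => True | _ => False end.

Definition Tm0 := nat.

Definition upF (s : nat -> nat) : nat -> nat :=
  fun i => match i with 0 => 0 | S j => S (s j) end.

Fixpoint fren (s : nat -> nat) (F : form) : form :=
  match F with
  | Atom X t ts => Atom X (s t) (map s ts)
  | Neg G => Neg (fren s G)
  | Or G H => Or (fren s G) (fren s H)
  | And G H => And (fren s G) (fren s H)
  | Ex G => Ex (fren (upF s) G)
  | All G => All (fren (upF s) G)
  | SEx m G => SEx m (fren s G)
  | SAll m G => SAll m (fren s G)
  end.

(* renaming of second-order variables: r n X = new index of the variable
   of arity n with index X *)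
Definition upSr (k : nat) (r : nat -> nat -> nat) : nat -> nat -> nat :=
  fun n X => if Nat.eqb n k then
               match X with 0 => 0 | S Y => S (r n Y) end
             else r n X.

Fixpoint sren (r : nat -> nat -> nat) (F : form) : form :=
  match F with
  | Atom X t ts => Atom (r (S (length ts)) X) t ts
  | Neg G => Neg (sren r G)
  | Or G H => Or (sren r G) (sren r H)
  | And G H => And (sren r G) (sren r H)
  | Ex G => Ex (sren r G)
  | All G => All (sren r G)
  | SEx m G => SEx m (sren (upSr (S m) r) G)
  | SAll m G => SAll m (sren (upSr (S m) r) G)
  end.

(* n-ary abstracts lambda x1..xn. G : a formula G in which the first-order
   variables 0..n-1 are the abstracted variables x1..xn (variable i-1 is x_i)
   and a first-order variable n+k denotes the outside variable k. *)
Definition Tm1 := form.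

Definition inst (n : nat) (G : Tm1) (args : list nat) : form :=
  fren (fun i => if Nat.ltb i n then nth i args 0 else i - n) G.

(* the abstract lambda x1..xn. X^n(x1,...,xn) *)
Definition var_abs (n X : nat) : Tm1 := Atom X 0 (List.seq 1 (pred n)).

(* simultaneous substitution of abstracts for second-order variables:
   s n X = abstract (of arity n) substituted for the variable (n, X) *)
Definition upS_F (s : nat -> nat -> Tm1) : nat -> nat -> Tm1 :=
  fun n X => fren (fun i => if Nat.ltb i n then i else S i) (s n X).

Definition upS_S (k : nat) (s : nat -> nat -> Tm1) : nat -> nat -> Tm1 :=
  fun n X =>
    let shift := sren (fun n' Y => if Nat.eqb n' k then S Y else Y) in
    if Nat.eqb n k then
      match X with 0 => var_abs n 0 | S Y => shift (s n Y) end
    else shift (s n X).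

Fixpoint ssubst (s : nat -> nat -> Tm1) (F : form) : form :=
  match F with
  | Atom X t ts => inst (S (length ts)) (s (S (length ts)) X) (t :: ts)
  | Neg G => Neg (ssubst s G)
  | Or G H => Or (ssubst s G) (ssubst s H)
  | And G H => And (ssubst s G) (ssubst s H)
  | Ex G => Ex (ssubst (upS_F s) G)
  | All G => All (ssubst (upS_F s) G)
  | SEx m G => SEx m (ssubst (upS_S (S m) s) G)
  | SAll m G => SAll m (ssubst (upS_S (S m) s) G)
  end.

Definition inst0 (F : form) (t : Tm0) : form :=
  fren (fun i => match i with 0 => t | S j => j end) F.

Definition inst1 (m : nat) (F : form) (T : Tm1) : form :=
  ssubst (fun n X => if Nat.eqb n (S m) then
                       match X with 0 => T | S Y => var_abs n Y end
                     else var_abs n X) F.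

Fixpoint fo_free (a : nat) (F : form) : Prop :=
  match F with
  | Atom _ t ts => t = a \/ In a ts
  | Neg G => fo_free a G
  | Or G H | And G H => fo_free a G \/ fo_free a H
  | Ex G | All G => fo_free (S a) G
  | SEx _ G | SAll _ G => fo_free a G
  end.

Fixpoint so_free (n Y : nat) (F : form) : Prop :=
  match F with
  | Atom X _ ts => S (length ts) = n /\ X = Y
  | Neg G => so_free n Y G
  | Or G H | And G H => so_free n Y G \/ so_free n Y H
  | Ex G | All G => so_free n Y G
  | SEx m G | SAll m G =>
      if Nat.eqb (S m) n then so_free n (S Y) G else so_free n Y G
  end.

(* The cut-free sequent calculus G^1LC^cf.  A sequent Gamma => Delta is a
   pair of finite sets, represented by lists (only membership matters).
   Every rule keeps its major formula in the premise, so "F, Gamma => Delta"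
   in a premise with conclusion "Gamma => Delta" (major formula in Gamma)
   is written [F :: Gamma]. *)
Inductive G1LC : list form -> list form -> Prop :=
| G_init A Γ Δ : is_atom A -> In A Γ -> In A Δ -> G1LC Γ Δ
| G_Lneg F Γ Δ : In (Neg F) Γ -> G1LC Γ (F :: Δ) -> G1LC Γ Δ
| G_Rneg F Γ Δ : In (Neg F) Δ -> G1LC (F :: Γ) Δ -> G1LC Γ Δ
| G_Lor F0 F1 Γ Δ : In (Or F0 F1) Γ ->
    G1LC (F0 :: Γ) Δ -> G1LC (F1 :: Γ) Δ -> G1LC Γ Δ
| G_Ror0 F0 F1 Γ Δ : In (Or F0 F1) Δ -> G1LC Γ (F0 :: Δ) -> G1LC Γ Δ
| G_Ror1 F0 F1 Γ Δ : In (Or F0 F1) Δ -> G1LC Γ (F1 :: Δ) -> G1LC Γ Δ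
| G_Land0 F0 F1 Γ Δ : In (And F0 F1) Γ -> G1LC (F0 :: Γ) Δ -> G1LC Γ Δ
| G_Land1 F0 F1 Γ Δ : In (And F0 F1) Γ -> G1LC (F1 :: Γ) Δ -> G1LC Γ Δ
| G_Rand F0 F1 Γ Δ : In (And F0 F1) Δ ->
    G1LC Γ (F0 :: Δ) -> G1LC Γ (F1 :: Δ) -> G1LC Γ Δ
| G_Lex F (a : Tm0) Γ Δ : In (Ex F) Γ ->
    (forall G, In G Γ \/ In G Δ -> ~ fo_free a G) ->
    G1LC (inst0 F a :: Γ) Δ -> G1LC Γ Δ
| G_Rex F (t : Tm0) Γ Δ : In (Ex F) Δ -> G1LC Γ (inst0 F t :: Δ) -> G1LC Γ Δ
| G_Lall F (t : Tm0) Γ Δ : In (All F) Γ -> G1LC (inst0 F t :: Γ) Δ -> G1LC Γ Δ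
| G_Rall F (a : Tm0) Γ Δ : In (All F) Δ ->
    (forall G, In G Γ \/ In G Δ -> ~ fo_free a G) ->
    G1LC Γ (inst0 F a :: Δ) -> G1LC Γ Δ
| G_LSex m F (Y : nat) Γ Δ : In (SEx m F) Γ ->
    (forall G, In G Γ \/ In G Δ -> ~ so_free (S m) Y G) ->
    G1LC (inst1 m F (var_abs (S m) Y) :: Γ) Δ -> G1LC Γ Δ
| G_RSex m F (T : Tm1) Γ Δ : In (SEx m F) Δ ->
    G1LC Γ (inst1 m F T :: Δ) -> G1LC Γ Δ
| G_LSall m F (T : Tm1) Γ Δ : In (SAll m F) Γ ->
    G1LC (inst1 m F T :: Γ) Δ -> G1LC Γ Δ
| G_RSall m F (Y : nat) Γ Δ : In (SAll m F) Δ ->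
    (forall G, In G Γ \/ In G Δ -> ~ so_free (S m) Y G) ->
    G1LC Γ (inst1 m F (var_abs (S m) Y) :: Δ) -> G1LC Γ Δ.

Record cBa : Type := CBa {
  car :> Type;
  le : car -> car -> Prop;
  sup : (car -> Prop) -> car;
  inf : (car -> Prop) -> car;
  compl : car -> car;
  le_refl : forall x, le x x;
  le_trans : forall x y z, le x y -> le y z -> le x z;
  le_antisym : forall x y, le x y -> le y x -> x = y;
  sup_ub : forall (P : car -> Prop) x, P x -> le x (sup P);
  sup_least : forall (P : car -> Prop) u, (forall x, P x -> le x u) -> le (sup P) u;
  inf_lb : forall (P : car -> Prop) x, P x -> le (inf P) x;
  inf_greatest : forall (P : car -> Prop) u, (forall x, P x -> le u x) -> le u (inf P);
  meet_join_distr : forall x y z,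
    inf (fun w => w = x \/ w = sup (fun v => v = y \/ v = z)) =
    sup (fun w => w = inf (fun v => v = x \/ v = y) \/
                  w = inf (fun v => v = x \/ v = z));
  compl_meet : forall x, inf (fun w => w = x \/ w = compl x) = sup (fun _ => False);
  compl_join : forall x, sup (fun w => w = x \/ w = compl x) = inf (fun _ => False)
}.

Section DB.
Variable B : cBa.

Definition DB : Type := { p : B * B | le B (fst p) (snd p) }.
Definition Box (a : DB) : B := fst (proj1_sig a).
Definition Dia (a : DB) : B := snd (proj1_sig a).

Definition pBox (p : B * B) := fst p.
Definition pDia (p : B * B) := snd p.
Definition pneg (a : DB) : B * B := (compl B (Dia a), compl B (Box a)).
Definition psup {I : Type} (f : I -> DB) : B * B :=
  (sup B (fun x => exists i, x = Box (f i)), sup B (fun x => exists i, x = Dia (f i))).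
Definition pinf {I : Type} (f : I -> DB) : B * B :=
  (inf B (fun x => exists i, x = Box (f i)), inf B (fun x => exists i, x = Dia (f i))).

Definition dle (a : DB) (q : B * B) : Prop :=
  le B (Box a) (pBox q) /\ le B (pDia q) (Dia a).

Definition semi_valuation (V : form -> DB) : Prop :=
  (forall F, dle (V (Neg F)) (pneg (V F))) /\
  (forall F0 F1, dle (V (Or F0 F1)) (psup (fun b : bool => V (if b then F1 else F0)))) /\
  (forall F0 F1, dle (V (And F0 F1)) (pinf (fun b : bool => V (if b then F1 else F0)))) /\
  (forall F, dle (V (Ex F)) (psup (fun t : Tm0 => V (inst0 F t)))) /\
  (forall F, dle (V (All F)) (pinf (fun t : Tm0 => V (inst0 F t)))) /\
  (forall m F, dle (V (SEx m F)) (psup (fun T : Tm1 => V (inst1 m F T)))) /\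
  (forall m F, dle (V (SAll m F)) (pinf (fun T : Tm1 => V (inst1 m F T)))).

End DB.
Arguments Box {B}.
Arguments Dia {B}.

(* Main.v *)
Require Import Defs.
From Stdlib Require Import List Arith Lia FunctionalExtensionality.
Import ListNotations.

Fixpoint sub (σ : nat -> nat) (s : nat -> nat -> Tm1) (F : form) : form :=
  match F with
  | Atom X t ts => inst (S (length ts)) (s (S (length ts)) X) (σ t :: map σ ts)
  | Neg G => Neg (sub σ s G)
  | Or G H => Or (sub σ s G) (sub σ s H)
  | And G H => And (sub σ s G) (sub σ s H)
  | Ex G => Ex (sub (upF σ) (upS_F s) G)
  | All G => All (sub (upF σ) (upS_F s) G)
  | SEx m G => SEx m (sub σ (upS_S (S m) s) G)
  | SAll m G => SAll m (sub σ (upS_S (S m) s) G)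
  end.

Definition liftn (n : nat) (ρ : nat -> nat) : nat -> nat :=
  fun i => if Nat.ltb i n then i else n + ρ (i - n).
Definition shn (n k : nat) : nat -> nat := fun i => if Nat.ltb i k then i else i + n.
Definition upSn n (s : nat -> nat -> Tm1) : nat -> nat -> Tm1 :=
  fun k X => fren (shn n k) (s k X).
Definition thetaA n σ s (T : Tm1) := sub (liftn n σ) (upSn n s) T.
Definition comp σ s (s1 : nat -> nat -> Tm1) : nat -> nat -> Tm1 :=
  fun n X => thetaA n σ s (s1 n X).
Definition iotaf n (args : list nat) : nat -> nat :=
  fun i => if Nat.ltb i n then nth i args 0 else i - n.
Definition shS k : nat -> nat -> nat := fun n' Y => if Nat.eqb n' k then S Y else Y.

Lemma nth_map_lt (f : nat -> nat) l i : i < length l -> nth i (map f l) 0 = f (nth i l 0).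
Proof. intro H. rewrite (nth_indep _ _ (f 0)) by (rewrite length_map; lia). apply map_nth. Qed.

Lemma fren_comp F : forall f g, fren f (fren g F) = fren (fun i => f (g i)) F.
Proof.
  induction F; intros f g; simpl; try (rewrite ?IHF, ?IHF1, ?IHF2; reflexivity).
  - rewrite map_map; reflexivity.
  - rewrite IHF; f_equal; f_equal; apply functional_extensionality; intros [|i]; reflexivity.
  - rewrite IHF; f_equal; f_equal; apply functional_extensionality; intros [|i]; reflexivity.
Qed.

Lemma fren_id F : forall f, (forall i, f i = i) -> fren f F = F.
Proof.
  induction F; intros f Hf; simpl; try (rewrite ?IHF, ?IHF1, ?IHF2 by assumption; reflexivity).
  - rewrite Hf. f_equal. rewrite <- (map_id ts) at 2. apply map_ext. auto.
  - rewrite IHF; [reflexivity| intros [|i]; simpl; auto].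
  - rewrite IHF; [reflexivity| intros [|i]; simpl; auto].
Qed.

Lemma fren_sren F : forall f r, fren f (sren r F) = sren r (fren f F).
Proof.
  induction F; intros f r; simpl; try (rewrite ?IHF, ?IHF1, ?IHF2; reflexivity).
  rewrite length_map; reflexivity.
Qed.

Lemma sren_comp F : forall a b, sren a (sren b F) = sren (fun n X => a n (b n X)) F.
Proof.
  induction F; intros a b; simpl; try (rewrite ?IHF, ?IHF1, ?IHF2; reflexivity).
  - rewrite IHF; f_equal; f_equal; do 2 (apply functional_extensionality; intro);
    unfold upSr; destruct (Nat.eqb _ _); [destruct x0|]; reflexivity.
  - rewrite IHF; f_equal; f_equal; do 2 (apply functional_extensionality; intro);
    unfold upSr; destruct (Nat.eqb _ _); [destruct x0|]; reflexivity.
Qed.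

Lemma so_free_pos F : forall n Y, so_free n Y F -> 1 <= n.
Proof.
  induction F; intros n Y H; simpl in H.
  all: try lia.
  all: try (destruct H; eauto; fail).
  all: try (eauto; fail).
  all: destruct n; [simpl in H; apply IHF in H; lia | lia].
Qed.

Lemma upS_S_eq0 k s : upS_S k s k 0 = var_abs k 0.
Proof. unfold upS_S; cbv zeta; rewrite Nat.eqb_refl; reflexivity. Qed.
Lemma upS_S_eqS k s Y : upS_S k s k (S Y) = sren (shS k) (s k Y).
Proof. unfold upS_S; cbv zeta; rewrite Nat.eqb_refl; reflexivity. Qed.
Lemma upS_S_neq k s n X : n <> k -> upS_S k s n X = sren (shS k) (s n X).
Proof. intro H; unfold upS_S; cbv zeta; apply Nat.eqb_neq in H; rewrite H; reflexivity. Qed.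

Lemma so_free_SEx_eq m G Y : so_free (S m) (S Y) G -> so_free (S m) Y (SEx m G).
Proof. simpl. rewrite Nat.eqb_refl. auto. Qed.
Lemma so_free_SEx_neq m G n Y : n <> S m -> so_free n Y G -> so_free n Y (SEx m G).
Proof. intros. simpl. destruct n; auto. destruct (Nat.eqb_spec m n); [lia|auto]. Qed.
Lemma so_free_SAll_eq m G Y : so_free (S m) (S Y) G -> so_free (S m) Y (SAll m G).
Proof. simpl. rewrite Nat.eqb_refl. auto. Qed.
Lemma so_free_SAll_neq m G n Y : n <> S m -> so_free n Y G -> so_free n Y (SAll m G).
Proof. intros. simpl. destruct n; auto. destruct (Nat.eqb_spec m n); [lia|auto]. Qed.

Lemma sub_ext_free F : forall σ σ' s s',
  (forall a, fo_free a F -> σ a = σ' a) ->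
  (forall n X, so_free n X F -> s n X = s' n X) ->
  sub σ s F = sub σ' s' F.
Proof.
  induction F; intros σ σ' s s' H1 H2; simpl in *.
  - rewrite H2 by auto. rewrite H1 by auto.
    replace (map σ ts) with (map σ' ts); [reflexivity|].
    apply map_ext_in; intros; symmetry; auto.
  - rewrite (IHF σ σ' s s'); auto.
  - rewrite (IHF1 σ σ' s s'), (IHF2 σ σ' s s'); auto.
  - rewrite (IHF1 σ σ' s s'), (IHF2 σ σ' s s'); auto.
  - rewrite (IHF (upF σ) (upF σ') (upS_F s) (upS_F s')); auto.
    + intros [|a] Ha; simpl; auto.
    + intros n X Hs; unfold upS_F; rewrite H2; auto.
  - rewrite (IHF (upF σ) (upF σ') (upS_F s) (upS_F s')); auto.
    + intros [|a] Ha; simpl; auto.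
    + intros n X Hs; unfold upS_F; rewrite H2; auto.
  - rewrite (IHF σ σ' (upS_S (S m) s) (upS_S (S m) s')); auto.
    intros n X Hs. destruct (Nat.eq_dec n (S m)) as [->|Hn].
    + destruct X; [rewrite !upS_S_eq0; reflexivity|].
      rewrite !upS_S_eqS, H2; auto.
      first [apply so_free_SEx_eq|apply so_free_SAll_eq]; auto.
    + rewrite !upS_S_neq by auto. rewrite H2; auto.
      first [apply so_free_SEx_neq|apply so_free_SAll_neq]; auto.
  - rewrite (IHF σ σ' (upS_S (S m) s) (upS_S (S m) s')); auto.
    intros n X Hs. destruct (Nat.eq_dec n (S m)) as [->|Hn].
    + destruct X; [rewrite !upS_S_eq0; reflexivity|].
      rewrite !upS_S_eqS, H2; auto.
      first [apply so_free_SEx_eq|apply so_free_SAll_eq]; auto.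
    + rewrite !upS_S_neq by auto. rewrite H2; auto.
      first [apply so_free_SEx_neq|apply so_free_SAll_neq]; auto.
Qed.

Lemma sub_ext_n1 F σ σ' s s' :
  (forall a, σ a = σ' a) -> (forall n X, 1 <= n -> s n X = s' n X) ->
  sub σ s F = sub σ' s' F.
Proof.
  intros H1 H2; apply sub_ext_free; auto.
  intros n X H; apply H2; eapply so_free_pos; eauto.
Qed.

Lemma iota_lift n args ρ i : length args = n ->
  ρ (iotaf n args i) = iotaf n (map ρ args) (liftn n ρ i).
Proof.
  intro Hl; unfold iotaf, liftn.
  destruct (Nat.ltb_spec i n).
  - destruct (Nat.ltb_spec i n); [|lia]. rewrite nth_map_lt; auto; lia.
  - destruct (Nat.ltb_spec (n + ρ (i - n)) n); [lia|]. f_equal; lia.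
Qed.

Lemma iota_sh k n args i : liftn k (iotaf n args) (shn n k i) = i.
Proof.
  unfold iotaf, liftn, shn.
  destruct (Nat.ltb_spec i k).
  - destruct (Nat.ltb_spec i k); lia.
  - destruct (Nat.ltb_spec (i+n) k); [lia|].
    destruct (Nat.ltb_spec (i + n - k) n); lia.
Qed.

Lemma inst_is n T args : inst n T args = fren (iotaf n args) T.
Proof. reflexivity. Qed.

Lemma fren_sub F : forall ρ σ s,
  fren ρ (sub σ s F) = sub (fun i => ρ (σ i)) (fun k X => fren (liftn k ρ) (s k X)) F.
Proof.
  induction F; intros ρ σ s; simpl; try (rewrite ?IHF, ?IHF1, ?IHF2; reflexivity).
  - rewrite !inst_is, !fren_comp. f_equal. apply functional_extensionality; intro i.
    replace (ρ (σ t) :: map (fun i => ρ (σ i)) ts) with (map ρ (σ t :: map σ ts))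
      by (simpl; rewrite map_map; reflexivity).
    apply iota_lift. simpl; rewrite length_map; reflexivity.
  - rewrite IHF. f_equal. f_equal.
    + apply functional_extensionality; intros [|i]; reflexivity.
    + do 2 (apply functional_extensionality; intro). unfold upS_F.
      rewrite !fren_comp. f_equal. apply functional_extensionality; intro i.
      unfold liftn. destruct (Nat.ltb_spec i x).
      * destruct (Nat.ltb_spec i x); [|lia]. destruct (Nat.ltb_spec i x); lia.
      * destruct (Nat.ltb_spec (S i) x); [lia|].
        replace (S i - x) with (S (i - x)) by lia. simpl.
        destruct (Nat.ltb_spec (x + ρ (i - x)) x); lia.
  - rewrite IHF. f_equal. f_equal.
    + apply functional_extensionality; intros [|i]; reflexivity.
    + do 2 (apply functional_extensionality; intro). unfold upS_F.
      rewrite !fren_comp. f_equal. apply functional_extensionality; intro i.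
      unfold liftn. destruct (Nat.ltb_spec i x).
      * destruct (Nat.ltb_spec i x); [|lia]. destruct (Nat.ltb_spec i x); lia.
      * destruct (Nat.ltb_spec (S i) x); [lia|].
        replace (S i - x) with (S (i - x)) by lia. simpl.
        destruct (Nat.ltb_spec (x + ρ (i - x)) x); lia.
  - rewrite IHF. f_equal. f_equal.
    do 2 (apply functional_extensionality; intro).
    destruct (Nat.eq_dec x (S m)) as [->|Hn].
    + destruct x0.
      * rewrite !upS_S_eq0. unfold var_abs. simpl. f_equal.
        rewrite <- (map_id (seq 1 m)) at 2. apply map_ext_in.
        intros a Ha. apply in_seq in Ha. unfold liftn.
        destruct (Nat.ltb_spec a (S m)); lia.
      * rewrite !upS_S_eqS. apply fren_sren.
    + rewrite !upS_S_neq by auto. apply fren_sren.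
  - rewrite IHF. f_equal. f_equal.
    do 2 (apply functional_extensionality; intro).
    destruct (Nat.eq_dec x (S m)) as [->|Hn].
    + destruct x0.
      * rewrite !upS_S_eq0. unfold var_abs. simpl. f_equal.
        rewrite <- (map_id (seq 1 m)) at 2. apply map_ext_in.
        intros a Ha. apply in_seq in Ha. unfold liftn.
        destruct (Nat.ltb_spec a (S m)); lia.
      * rewrite !upS_S_eqS. apply fren_sren.
    + rewrite !upS_S_neq by auto. apply fren_sren.
Qed.

Lemma sub_fren F : forall σ s ρ, sub σ s (fren ρ F) = sub (fun i => σ (ρ i)) s F.
Proof.
  induction F; intros σ s ρ; simpl; try (rewrite ?IHF, ?IHF1, ?IHF2; reflexivity).
  - rewrite length_map, map_map. reflexivity.
  - rewrite IHF. f_equal. f_equal. apply functional_extensionality; intros [|i]; reflexivity.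
  - rewrite IHF. f_equal. f_equal. apply functional_extensionality; intros [|i]; reflexivity.
Qed.

Lemma sren_var_abs r n X : 1 <= n -> sren r (var_abs n X) = var_abs n (r n X).
Proof.
  intro H. unfold var_abs. simpl. rewrite length_seq.
  replace (S (pred n)) with n by lia. reflexivity.
Qed.

Lemma fren_var_abs f n X : (forall i, i < n -> f i = i) -> 1 <= n ->
  fren f (var_abs n X) = var_abs n X.
Proof.
  intros Hf H. unfold var_abs. simpl. rewrite Hf by lia. f_equal.
  rewrite <- (map_id (seq 1 (pred n))) at 2. apply map_ext_in.
  intros a Ha. apply in_seq in Ha. apply Hf. lia.
Qed.

Lemma sren_sub F : forall r σ s,
  sren r (sub σ s F) = sub σ (fun k X => sren r (s k X)) F.
Proof.
  induction F; intros r σ s; simpl; try (rewrite ?IHF, ?IHF1, ?IHF2; reflexivity).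
  - rewrite !inst_is. symmetry; apply fren_sren.
  - rewrite IHF. f_equal. f_equal. do 2 (apply functional_extensionality; intro).
    unfold upS_F. symmetry; apply fren_sren.
  - rewrite IHF. f_equal. f_equal. do 2 (apply functional_extensionality; intro).
    unfold upS_F. symmetry; apply fren_sren.
  - rewrite IHF. f_equal. f_equal. do 2 (apply functional_extensionality; intro).
    destruct (Nat.eq_dec x (S m)) as [->|Hn].
    + destruct x0.
      * rewrite !upS_S_eq0. rewrite sren_var_abs by lia. unfold upSr. rewrite Nat.eqb_refl. reflexivity.
      * rewrite !upS_S_eqS. rewrite !sren_comp. f_equal.
        do 2 (apply functional_extensionality; intro). unfold upSr, shS.
        destruct (Nat.eqb _ (S m)); reflexivity.
    + rewrite !upS_S_neq by auto. rewrite !sren_comp. f_equal.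
        do 2 (apply functional_extensionality; intro). unfold upSr, shS.
        destruct (Nat.eqb _ (S m)); reflexivity.
  - rewrite IHF. f_equal. f_equal. do 2 (apply functional_extensionality; intro).
    destruct (Nat.eq_dec x (S m)) as [->|Hn].
    + destruct x0.
      * rewrite !upS_S_eq0. rewrite sren_var_abs by lia. unfold upSr. rewrite Nat.eqb_refl. reflexivity.
      * rewrite !upS_S_eqS. rewrite !sren_comp. f_equal.
        do 2 (apply functional_extensionality; intro). unfold upSr, shS.
        destruct (Nat.eqb _ (S m)); reflexivity.
    + rewrite !upS_S_neq by auto. rewrite !sren_comp. f_equal.
        do 2 (apply functional_extensionality; intro). unfold upSr, shS.
        destruct (Nat.eqb _ (S m)); reflexivity.
Qed.

Lemma sub_sren F : forall r σ s,
  sub σ s (sren r F) = sub σ (fun k X => s k (r k X)) F.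
Proof.
  induction F; intros r σ s; simpl; try (rewrite ?IHF, ?IHF1, ?IHF2; reflexivity).
  - rewrite IHF. f_equal. f_equal. do 2 (apply functional_extensionality; intro).
    unfold upS_S, upSr; cbv zeta. destruct (Nat.eqb x (S m)); [destruct x0|]; reflexivity.
  - rewrite IHF. f_equal. f_equal. do 2 (apply functional_extensionality; intro).
    unfold upS_S, upSr; cbv zeta. destruct (Nat.eqb x (S m)); [destruct x0|]; reflexivity.
Qed.

Lemma sub_var n σ s Y : 1 <= n -> sub (liftn n σ) (upSn n s) (var_abs n Y) = s n Y.
Proof.
  intro H. unfold var_abs. simpl. rewrite length_seq.
  replace (S (pred n)) with n by lia.
  rewrite inst_is. unfold upSn. rewrite fren_comp. apply fren_id.
  intro i. unfold shn, iotaf.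
  destruct (Nat.ltb_spec i n).
  - destruct (Nat.ltb_spec i n); [|lia].
    replace (liftn n σ 0 :: map (liftn n σ) (seq 1 (pred n))) with (map (liftn n σ) (seq 0 n))
      by (destruct n; [lia|reflexivity]).
    rewrite nth_map_lt by (rewrite length_seq; lia).
    rewrite seq_nth by lia. simpl. unfold liftn. destruct (Nat.ltb_spec i n); lia.
  - destruct (Nat.ltb_spec (i + n) n); lia.
Qed.

Lemma thetaA_shift n σ s K T :
  thetaA n σ (upS_S K s) (sren (shS K) T) = sren (shS K) (thetaA n σ s T).
Proof.
  unfold thetaA. rewrite sub_sren, sren_sub. f_equal.
  do 2 (apply functional_extensionality; intro). unfold upSn.
  destruct (Nat.eq_dec x K) as [->|Hn].
  - unfold shS at 1. rewrite Nat.eqb_refl. rewrite upS_S_eqS. apply fren_sren.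
  - unfold shS at 1. replace (Nat.eqb x K) with false by (symmetry; apply Nat.eqb_neq; auto).
    rewrite upS_S_neq by auto. apply fren_sren.
Qed.

Lemma comp_upF σ s s1 k X :
  comp (upF σ) (upS_F s) (upS_F s1) k X = upS_F (comp σ s s1) k X.
Proof.
  unfold comp, thetaA, upS_F. rewrite sub_fren, fren_sub. f_equal.
  - apply functional_extensionality; intro i. unfold liftn.
    destruct (Nat.ltb_spec i k).
    + destruct (Nat.ltb_spec i k); [|lia]. destruct (Nat.ltb_spec i k); lia.
    + destruct (Nat.ltb_spec (S i) k); [lia|].
      destruct (Nat.ltb_spec (k + σ (i - k)) k); [lia|].
      replace (S i - k) with (S (i - k)) by lia. simpl. lia.
  - do 2 (apply functional_extensionality; intro). unfold upSn, upS_F.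
    rewrite !fren_comp. f_equal. apply functional_extensionality; intro i.
    unfold shn, liftn.
    destruct (Nat.ltb_spec i x).
    + destruct (Nat.ltb_spec i x); [|lia]. destruct (Nat.ltb_spec i x); lia.
    + destruct (Nat.ltb_spec (S i) x); [lia|].
      destruct (Nat.ltb_spec (i + k) x); [lia|].
      destruct (Nat.ltb_spec (i + k - x) k); lia.
Qed.

Lemma comp_upS σ s s1 K n X : 1 <= n -> 1 <= K ->
  comp σ (upS_S K s) (upS_S K s1) n X = upS_S K (comp σ s s1) n X.
Proof.
  intros Hn HK. unfold comp.
  destruct (Nat.eq_dec n K) as [->|Hne].
  - destruct X.
    + rewrite !upS_S_eq0. unfold thetaA. rewrite sub_var by lia. apply upS_S_eq0.
    + rewrite !upS_S_eqS. apply thetaA_shift.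
  - rewrite !upS_S_neq by auto. apply thetaA_shift.
Qed.

Lemma sub_comp F : forall σ s σ1 s1,
  sub σ s (sub σ1 s1 F) = sub (fun i => σ (σ1 i)) (comp σ s s1) F.
Proof.
  induction F; intros σ s σ1 s1; simpl; try (rewrite ?IHF, ?IHF1, ?IHF2; reflexivity).
  - rewrite inst_is, sub_fren. unfold comp at 1. rewrite inst_is. unfold thetaA.
    rewrite fren_sub. f_equal.
    + apply functional_extensionality; intro i.
      replace (σ (σ1 t) :: map (fun i => σ (σ1 i)) ts) with (map σ (σ1 t :: map σ1 ts))
        by (simpl; rewrite map_map; reflexivity).
      apply iota_lift. simpl; rewrite length_map; reflexivity.
    + do 2 (apply functional_extensionality; intro). unfold upSn.
      rewrite fren_comp. symmetry. apply fren_id. intro i. apply iota_sh.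
  - rewrite IHF. f_equal. f_equal.
    + apply functional_extensionality; intros [|i]; reflexivity.
    + do 2 (apply functional_extensionality; intro). apply comp_upF.
  - rewrite IHF. f_equal. f_equal.
    + apply functional_extensionality; intros [|i]; reflexivity.
    + do 2 (apply functional_extensionality; intro). apply comp_upF.
  - rewrite IHF. f_equal. apply sub_ext_n1; auto. intros. apply comp_upS; lia.
  - rewrite IHF. f_equal. apply sub_ext_n1; auto. intros. apply comp_upS; lia.
Qed.

Lemma map_nth_seq0 ts : map (fun a => nth a ts 0) (seq 0 (length ts)) = ts.
Proof.
  induction ts; simpl; auto. f_equal. rewrite <- seq_shift, map_map. simpl. exact IHts.
Qed.

Lemma sub_id F : forall σ s, (forall i, σ i = i) ->
  (forall n X, 1 <= n -> s n X = var_abs n X) -> sub σ s F = F.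
Proof.
  induction F; intros σ s H1 H2; simpl; try (rewrite ?IHF, ?IHF1, ?IHF2 by auto; reflexivity).
  - rewrite H2 by lia. unfold var_abs. simpl. rewrite inst_is. simpl. rewrite H1.
    idtac.
    replace (map σ ts) with ts by (rewrite <- (map_id ts) at 1; apply map_ext; auto).
    f_equal.
    rewrite <- seq_shift, map_map.
    transitivity (map (fun a => nth a ts 0) (seq 0 (length ts))); [|apply map_nth_seq0].
    apply map_ext_in. intros a Ha. apply in_seq in Ha. unfold iotaf.
    destruct (Nat.ltb_spec (S a) (S (length ts))); [reflexivity|lia].
  - rewrite IHF; auto.
    + intros [|i]; simpl; auto.
    + intros n X Hn. unfold upS_F. rewrite H2 by auto. apply fren_var_abs; auto.
      intros i Hi. destruct (Nat.ltb_spec i n); lia.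
  - rewrite IHF; auto.
    + intros [|i]; simpl; auto.
    + intros n X Hn. unfold upS_F. rewrite H2 by auto. apply fren_var_abs; auto.
      intros i Hi. destruct (Nat.ltb_spec i n); lia.
  - rewrite IHF; auto. intros n X Hn.
    destruct (Nat.eq_dec n (S m)) as [->|Hne].
    + destruct X. apply upS_S_eq0. rewrite upS_S_eqS, H2 by lia. rewrite sren_var_abs by lia.
      unfold shS. rewrite Nat.eqb_refl. reflexivity.
    + rewrite upS_S_neq, H2 by auto. rewrite sren_var_abs by lia.
      unfold shS. replace (Nat.eqb n (S m)) with false by (symmetry; apply Nat.eqb_neq; auto).
      reflexivity.
  - rewrite IHF; auto. intros n X Hn.
    destruct (Nat.eq_dec n (S m)) as [->|Hne].
    + destruct X. apply upS_S_eq0. rewrite upS_S_eqS, H2 by lia. rewrite sren_var_abs by lia.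
      unfold shS. rewrite Nat.eqb_refl. reflexivity.
    + rewrite upS_S_neq, H2 by auto. rewrite sren_var_abs by lia.
      unfold shS. replace (Nat.eqb n (S m)) with false by (symmetry; apply Nat.eqb_neq; auto).
      reflexivity.
Qed.

Lemma ssubst_sub F : forall σ s, (forall i, σ i = i) -> ssubst s F = sub σ s F.
Proof.
  induction F; intros σ s H1; simpl; try (rewrite <- ?IHF, <- ?IHF1, <- ?IHF2 by auto; reflexivity).
  - rewrite H1. replace (map σ ts) with ts by (rewrite <- (map_id ts) at 1; apply map_ext; auto).
    reflexivity.
  - rewrite (IHF (upF σ)); auto. intros [|i]; simpl; auto.
  - rewrite (IHF (upF σ)); auto. intros [|i]; simpl; auto.
Qed.

Lemma inst0_sub F t σ s :
  sub σ s (inst0 F t) = inst0 (sub (upF σ) (upS_F s) F) (σ t).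
Proof.
  unfold inst0. rewrite sub_fren, fren_sub. f_equal.
  - apply functional_extensionality; intros [|i]; reflexivity.
  - do 2 (apply functional_extensionality; intro). unfold upS_F.
    rewrite fren_comp. symmetry. apply fren_id. intro i. unfold liftn.
    destruct (Nat.ltb_spec i x).
    + destruct (Nat.ltb_spec i x); lia.
    + destruct (Nat.ltb_spec (S i) x); [lia|].
      replace (S i - x) with (S (i - x)) by lia. lia.
Qed.

Lemma thetaA_id_shift n K sθ U : 1 <= K ->
  (forall Y, sθ K (S Y) = var_abs K Y) -> (forall k Z, k <> K -> sθ k Z = var_abs k Z) ->
  thetaA n (fun i => i) sθ (sren (shS K) U) = U.
Proof.
  intros HK H1 H2. unfold thetaA. rewrite sub_sren. apply sub_id.
  - intro i. unfold liftn. destruct (Nat.ltb_spec i n); lia.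
  - intros k Z Hk. unfold upSn, shS. destruct (Nat.eq_dec k K) as [->|Hne].
    + rewrite Nat.eqb_refl, H1. apply fren_var_abs; auto. intros i Hi. unfold shn.
      destruct (Nat.ltb_spec i K); lia.
    + replace (Nat.eqb k K) with false by (symmetry; apply Nat.eqb_neq; auto).
      rewrite H2 by auto. apply fren_var_abs; auto. intros i Hi. unfold shn.
      destruct (Nat.ltb_spec i k); lia.
Qed.

Lemma inst1_sub m F T σ s :
  sub σ s (inst1 m F T) = inst1 m (sub σ (upS_S (S m) s) F) (thetaA (S m) σ s T).
Proof.
  unfold inst1. rewrite !(ssubst_sub _ (fun i => i)) by auto. rewrite !sub_comp.
  apply sub_ext_n1; [reflexivity|]. intros n X Hn. unfold comp.
  destruct (Nat.eq_dec n (S m)) as [->|Hne].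
  - rewrite Nat.eqb_refl. destruct X.
    + rewrite upS_S_eq0. unfold thetaA at 2. rewrite sub_var by lia.
      rewrite Nat.eqb_refl. reflexivity.
    + rewrite upS_S_eqS. unfold thetaA at 1. rewrite sub_var by lia.
      symmetry. apply (thetaA_id_shift _ (S m)); [lia| |].
      * intro Y. rewrite Nat.eqb_refl. reflexivity.
      * intros k Z Hk. replace (Nat.eqb k (S m)) with false by (symmetry; apply Nat.eqb_neq; auto).
        reflexivity.
  - replace (Nat.eqb n (S m)) with false by (symmetry; apply Nat.eqb_neq; auto).
    rewrite upS_S_neq by auto. unfold thetaA at 1. rewrite sub_var by lia.
    symmetry. apply (thetaA_id_shift _ (S m)); [lia| |].
    * intro Y. rewrite Nat.eqb_refl. reflexivity.
    * intros k Z Hk. replace (Nat.eqb k (S m)) with false by (symmetry; apply Nat.eqb_neq; auto).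
      reflexivity.
Qed.

Section Lat.
Variable B : cBa.
Notation le := (le B).
Definition meet (x y : B) := inf B (fun w => w = x \/ w = y).
Definition join (x y : B) := sup B (fun w => w = x \/ w = y).

Lemma meet_l x y : le (meet x y) x. Proof. apply inf_lb; auto. Qed.
Lemma meet_r x y : le (meet x y) y. Proof. apply inf_lb; auto. Qed.
Lemma meet_glb x y z : le z x -> le z y -> le z (meet x y).
Proof. intros; apply inf_greatest; intros w [->| ->]; auto. Qed.
Lemma join_l x y : le x (join x y). Proof. apply sup_ub; auto. Qed.
Lemma join_r x y : le y (join x y). Proof. apply sup_ub; auto. Qed.
Lemma join_lub x y z : le x z -> le y z -> le (join x y) z.
Proof. intros; apply sup_least; intros w [->| ->]; auto. Qed.
Lemma distr x y z : le (meet x (join y z)) (join (meet x y) (meet x z)).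
Proof. unfold meet, join. rewrite meet_join_distr. apply le_refl. Qed.
Lemma bot_le x : le (sup B (fun _ => False)) x. Proof. apply sup_least; tauto. Qed.
Lemma le_top x : le x (inf B (fun _ => False)). Proof. apply inf_greatest; tauto. Qed.
Lemma cm_bot x y : le (meet x (compl B x)) y.
Proof. unfold meet. rewrite compl_meet. apply bot_le. Qed.
Lemma top_cj x y : le x (join y (compl B y)).
Proof. unfold join. rewrite compl_join. apply le_top. Qed.
Lemma lt x y z : le x y -> le y z -> le x z. Proof. apply le_trans. Qed.
Lemma meet_comm x y : le (meet x y) (meet y x).
Proof. apply meet_glb; [apply meet_r|apply meet_l]. Qed.
Lemma meet_mono a b a' b' : le a a' -> le b b' -> le (meet a b) (meet a' b').
Proof. intros; apply meet_glb; [eapply lt; [apply meet_l|auto]|eapply lt; [apply meet_r|auto]]. Qed.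

Lemma D1 x a b s : le x (join a b) -> le (meet x a) s -> le (meet x b) s -> le x s.
Proof.
  intros H Ha Hb. eapply lt; [apply (meet_glb x (join a b) x (le_refl B x) H)|].
  eapply lt; [apply distr|]. apply join_lub; auto.
Qed.

Lemma Dsup x (P : B -> Prop) s : le x (sup B P) -> (forall p, P p -> le (meet x p) s) -> le x s.
Proof.
  intros H Hp.
  assert (Hs : le (sup B P) (join (compl B x) s)).
  { apply sup_least. intros p Pp. apply (D1 p x (compl B x)); [apply top_cj| |].
    - eapply lt; [apply meet_comm|]. eapply lt; [apply Hp; auto|apply join_r].
    - eapply lt; [apply meet_r|apply join_l]. }
  apply (D1 x (compl B x) s); [eapply lt; eauto| apply cm_bot | apply meet_r].
Qed.

Lemma Dinf x (P : B -> Prop) s : (forall p, P p -> le x (join p s)) -> le (inf B P) s -> le x s.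
Proof.
  intros Hp H.
  assert (Hm : le (meet x (compl B s)) (inf B P)).
  { apply inf_greatest. intros p Pp. apply (D1 _ p s).
    - eapply lt; [apply meet_l|]. auto.
    - apply meet_r.
    - eapply lt; [|apply (cm_bot s p)]. apply meet_glb; [apply meet_r|].
      eapply lt; [apply meet_l|apply meet_r]. }
  apply (D1 x s (compl B s)); [apply top_cj|apply meet_r|eapply lt; eauto].
Qed.
End Lat.

Definition upd0 (σ : nat -> nat) a t := fun i => if Nat.eqb i a then t else σ i.
Definition upd1 (s : nat -> nat -> Tm1) K Y T :=
  fun k Z => if andb (Nat.eqb k K) (Nat.eqb Z Y) then T else s k Z.

Lemma ag0 G a t σ s : ~ fo_free a G -> sub (upd0 σ a t) s G = sub σ s G.
Proof.
  intro H. apply sub_ext_free; auto. intros b Hb. unfold upd0.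
  destruct (Nat.eqb_spec b a); [subst; contradiction|reflexivity].
Qed.

Lemma key0 F a t σ s : ~ fo_free (S a) F ->
  sub (upd0 σ a t) s (inst0 F a) = inst0 (sub (upF σ) (upS_F s) F) t.
Proof.
  intro H. rewrite inst0_sub. unfold upd0 at 2. rewrite Nat.eqb_refl. f_equal.
  apply sub_ext_free; auto. intros [|b] Hb; simpl; auto. unfold upd0.
  destruct (Nat.eqb_spec b a); [subst; contradiction|reflexivity].
Qed.

Lemma ag1 G K Y T σ s : ~ so_free K Y G -> sub σ (upd1 s K Y T) G = sub σ s G.
Proof.
  intro H. apply sub_ext_free; auto. intros n X Hb. unfold upd1.
  destruct (Nat.eqb_spec n K); destruct (Nat.eqb_spec X Y); simpl; subst; auto; contradiction.
Qed.

Lemma key1 m F Y T σ s : ~ so_free (S m) (S Y) F ->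
  sub σ (upd1 s (S m) Y T) (inst1 m F (var_abs (S m) Y)) = inst1 m (sub σ (upS_S (S m) s) F) T.
Proof.
  intro H. rewrite inst1_sub. unfold thetaA. rewrite sub_var by lia.
  unfold upd1 at 2. rewrite !Nat.eqb_refl. simpl. f_equal.
  apply sub_ext_free; auto. intros n X Hb.
  destruct (Nat.eq_dec n (S m)) as [->|Hne].
  - destruct X; [rewrite !upS_S_eq0; reflexivity|]. rewrite !upS_S_eqS. f_equal.
    unfold upd1. rewrite Nat.eqb_refl. destruct (Nat.eqb_spec X Y); [subst; contradiction|reflexivity].
  - rewrite !upS_S_neq by auto. f_equal. unfold upd1.
    destruct (Nat.eqb_spec n (S m)); [contradiction|reflexivity].
Qed.

Section Sound.
Variable B : cBa.
Variable V : form -> DB B.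
Notation le := (le B).

Definition Inf σ s Γ := inf B (fun x => exists A, In A Γ /\ x = Box (V (sub σ s A))).
Definition Sup σ s Δ := sup B (fun x => exists A, In A Δ /\ x = Dia (V (sub σ s A))).

Lemma Inf_in σ s Γ G : In G Γ -> le (Inf σ s Γ) (Box (V (sub σ s G))).
Proof. intro; apply inf_lb; eauto. Qed.
Lemma Sup_in σ s Δ G : In G Δ -> le (Dia (V (sub σ s G))) (Sup σ s Δ).
Proof. intro; apply sup_ub; eauto. Qed.
Lemma Inf_cons σ s σ' s' Γ F : (forall G, In G Γ -> sub σ' s' G = sub σ s G) ->
  le (meet B (Box (V (sub σ' s' F))) (Inf σ s Γ)) (Inf σ' s' (F :: Γ)).
Proof.
  intro H. apply inf_greatest. intros x [A [[<-|HA] ->]]; [apply meet_l|].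
  eapply le_trans; [apply meet_r|]. rewrite H by auto. apply Inf_in; auto.
Qed.
Lemma Inf_ag σ s σ' s' Γ : (forall G, In G Γ -> sub σ' s' G = sub σ s G) ->
  le (Inf σ s Γ) (Inf σ' s' Γ).
Proof.
  intro H. apply inf_greatest. intros x [A [HA ->]]. rewrite H by auto. apply Inf_in; auto.
Qed.
Lemma Sup_cons σ s σ' s' Δ F : (forall G, In G Δ -> sub σ' s' G = sub σ s G) ->
  le (Sup σ' s' (F :: Δ)) (join B (Dia (V (sub σ' s' F))) (Sup σ s Δ)).
Proof.
  intro H. apply sup_least. intros x [A [[<-|HA] ->]]; [apply join_l|].
  eapply le_trans; [|apply join_r]. rewrite H by auto. apply Sup_in; auto.
Qed.
Lemma Sup_ag σ s σ' s' Δ : (forall G, In G Δ -> sub σ' s' G = sub σ s G) ->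
  le (Sup σ' s' Δ) (Sup σ s Δ).
Proof.
  intro H. apply sup_least. intros x [A [HA ->]]. rewrite H by auto. apply Sup_in; auto.
Qed.
Lemma box_dia (a : DB B) : le (Box a) (Dia a). Proof. exact (proj2_sig a). Qed.

End Sound.

Lemma soundness (B : cBa) (V : form -> DB B) (HV : semi_valuation B V) Γ Δ :
  G1LC Γ Δ -> forall σ s, le B (Inf B V σ s Γ) (Sup B V σ s Δ).
Proof.
  destruct HV as (Hneg & Hor & Hand & Hex & Hall & Hsex & Hsall).
  assert (tr : forall x y z, le B x y -> le B y z -> le B x z) by apply le_trans.
  assert (rf : forall G : list form, forall σ s σ' s', σ' = σ -> s' = s ->
     forall A, In A G -> sub σ' s' A = sub σ s A) by (intros; subst; auto).
  induction 1; intros σ s.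
  -
    eapply tr; [apply Inf_in; eauto|]. eapply tr; [apply box_dia|]. apply Sup_in; auto.
  -
    pose proof (Inf_in B V σ s _ _ H) as h1. simpl in h1.
    destruct (Hneg (sub σ s F)) as [h2 _]. simpl in h2.
    apply (D1 B _ (Dia (V (sub σ s F))) (Sup B V σ s Δ)).
    + eapply tr; [apply IHG1LC|]. apply Sup_cons; auto.
    + eapply tr; [apply meet_mono; [eapply tr; [exact h1|exact h2]|apply le_refl]|].
      eapply tr; [apply meet_comm|apply cm_bot].
    + apply meet_r.
  -
    pose proof (Sup_in B V σ s _ _ H) as h1. simpl in h1.
    destruct (Hneg (sub σ s F)) as [_ h2]. simpl in h2.
    apply (D1 B _ (Box (V (sub σ s F))) (compl B (Box (V (sub σ s F))))).
    + apply top_cj.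
    + eapply tr; [|apply IHG1LC]. eapply tr; [apply meet_comm|]. apply Inf_cons; auto.
    + eapply tr; [apply meet_r|]. eapply tr; [exact h2|exact h1].
  -
    pose proof (Inf_in B V σ s _ _ H) as h1. simpl in h1.
    destruct (Hor (sub σ s F0) (sub σ s F1)) as [h2 _]. simpl in h2.
    apply (D1 B _ (Box (V (sub σ s F0))) (Box (V (sub σ s F1)))).
    + eapply tr; [exact h1|]. eapply tr; [exact h2|]. apply sup_least.
      intros x [[|] ->]; [apply join_r|apply join_l].
    + eapply tr; [|apply IHG1LC1]. eapply tr; [apply meet_comm|]. apply Inf_cons; auto.
    + eapply tr; [|apply IHG1LC2]. eapply tr; [apply meet_comm|]. apply Inf_cons; auto.
  -
    pose proof (Sup_in B V σ s _ _ H) as h1. simpl in h1.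
    destruct (Hor (sub σ s F0) (sub σ s F1)) as [_ h2]. simpl in h2.
    eapply tr; [apply IHG1LC|]. eapply tr; [apply Sup_cons; auto|].
    apply join_lub; [|apply le_refl]. eapply tr; [|exact h1]. eapply tr; [|exact h2].
    apply sup_ub. exists false; reflexivity.
  -
    pose proof (Sup_in B V σ s _ _ H) as h1. simpl in h1.
    destruct (Hor (sub σ s F0) (sub σ s F1)) as [_ h2]. simpl in h2.
    eapply tr; [apply IHG1LC|]. eapply tr; [apply Sup_cons; auto|].
    apply join_lub; [|apply le_refl]. eapply tr; [|exact h1]. eapply tr; [|exact h2].
    apply sup_ub. exists true; reflexivity.
  -
    pose proof (Inf_in B V σ s _ _ H) as h1. simpl in h1.
    destruct (Hand (sub σ s F0) (sub σ s F1)) as [h2 _]. simpl in h2.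
    eapply tr; [|apply IHG1LC]. eapply tr; [|apply Inf_cons; auto].
    apply meet_glb; [|apply le_refl]. eapply tr; [exact h1|]. eapply tr; [exact h2|].
    apply inf_lb. exists false; reflexivity.
  -
    pose proof (Inf_in B V σ s _ _ H) as h1. simpl in h1.
    destruct (Hand (sub σ s F0) (sub σ s F1)) as [h2 _]. simpl in h2.
    eapply tr; [|apply IHG1LC]. eapply tr; [|apply Inf_cons; auto].
    apply meet_glb; [|apply le_refl]. eapply tr; [exact h1|]. eapply tr; [exact h2|].
    apply inf_lb. exists true; reflexivity.
  -
    pose proof (Sup_in B V σ s _ _ H) as h1. simpl in h1.
    destruct (Hand (sub σ s F0) (sub σ s F1)) as [_ h2]. simpl in h2.
    apply (D1 B _ (Dia (V (sub σ s F0))) (Sup B V σ s Δ)).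
    + eapply tr; [apply IHG1LC1|]. apply Sup_cons; auto.
    + apply (D1 B _ (Dia (V (sub σ s F1))) (Sup B V σ s Δ)).
      * eapply tr; [apply meet_l|]. eapply tr; [apply IHG1LC2|]. apply Sup_cons; auto.
      * eapply tr; [|exact h1]. eapply tr; [|exact h2]. apply inf_greatest.
        intros x [[|] ->]; [apply meet_r|eapply tr; [apply meet_l|apply meet_r]].
      * apply meet_r.
    + apply meet_r.
  -
    pose proof (Inf_in B V σ s _ _ H) as h1. simpl in h1.
    destruct (Hex (sub (upF σ) (upS_F s) F)) as [h2 _]. simpl in h2.
    apply (Dsup B _ _ _ (tr _ _ _ h1 h2)). intros p [t0 ->].
    assert (Hf : ~ fo_free (S a) F) by (apply (H0 (Ex F)); auto).
    eapply tr; [apply meet_comm|].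
    rewrite <- (key0 F a t0 σ s Hf).
    eapply tr; [apply (Inf_cons B V σ s (upd0 σ a t0) s)|].
    { intros G HG. apply ag0. apply H0; auto. }
    eapply tr; [apply IHG1LC|]. apply Sup_ag. intros G HG. apply ag0. apply H0; auto.
  -
    pose proof (Sup_in B V σ s _ _ H) as h1. simpl in h1.
    destruct (Hex (sub (upF σ) (upS_F s) F)) as [_ h2]. simpl in h2.
    eapply tr; [apply IHG1LC|]. eapply tr; [apply Sup_cons; auto|].
    apply join_lub; [|apply le_refl]. eapply tr; [|exact h1]. eapply tr; [|exact h2].
    apply sup_ub. exists (σ t). rewrite inst0_sub. reflexivity.
  -
    pose proof (Inf_in B V σ s _ _ H) as h1. simpl in h1.
    destruct (Hall (sub (upF σ) (upS_F s) F)) as [h2 _]. simpl in h2.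
    eapply tr; [|apply IHG1LC]. eapply tr; [|apply Inf_cons; auto].
    apply meet_glb; [|apply le_refl]. eapply tr; [exact h1|]. eapply tr; [exact h2|].
    apply inf_lb. exists (σ t). rewrite inst0_sub. reflexivity.
  -
    pose proof (Sup_in B V σ s _ _ H) as h1. simpl in h1.
    destruct (Hall (sub (upF σ) (upS_F s) F)) as [_ h2]. simpl in h2.
    refine (Dinf B _ _ _ _ (tr _ _ _ h2 h1)). intros p [t0 ->].
    assert (Hf : ~ fo_free (S a) F) by (apply (H0 (All F)); auto).
    rewrite <- (key0 F a t0 σ s Hf).
    eapply tr; [apply (Inf_ag B V σ s (upd0 σ a t0) s)|].
    { intros G HG. apply ag0. apply H0; auto. }
    eapply tr; [apply IHG1LC|]. apply Sup_cons. intros G HG. apply ag0. apply H0; auto.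
  -
    pose proof (Inf_in B V σ s _ _ H) as h1. simpl in h1.
    destruct (Hsex m (sub σ (upS_S (S m) s) F)) as [h2 _]. simpl in h2.
    apply (Dsup B _ _ _ (tr _ _ _ h1 h2)). intros p [T0 ->].
    assert (Hf : ~ so_free (S m) (S Y) F).
    { intro Hc. apply (H0 (SEx m F)); auto. apply so_free_SEx_eq; auto. }
    eapply tr; [apply meet_comm|].
    rewrite <- (key1 m F Y T0 σ s Hf).
    eapply tr; [apply (Inf_cons B V σ s σ (upd1 s (S m) Y T0))|].
    { intros G HG. apply ag1. apply H0; auto. }
    eapply tr; [apply IHG1LC|]. apply Sup_ag. intros G HG. apply ag1. apply H0; auto.
  -
    pose proof (Sup_in B V σ s _ _ H) as h1. simpl in h1.
    destruct (Hsex m (sub σ (upS_S (S m) s) F)) as [_ h2]. simpl in h2.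
    eapply tr; [apply IHG1LC|]. eapply tr; [apply Sup_cons; auto|].
    apply join_lub; [|apply le_refl]. eapply tr; [|exact h1]. eapply tr; [|exact h2].
    apply sup_ub. exists (thetaA (S m) σ s T). rewrite inst1_sub. reflexivity.
  -
    pose proof (Inf_in B V σ s _ _ H) as h1. simpl in h1.
    destruct (Hsall m (sub σ (upS_S (S m) s) F)) as [h2 _]. simpl in h2.
    eapply tr; [|apply IHG1LC]. eapply tr; [|apply Inf_cons; auto].
    apply meet_glb; [|apply le_refl]. eapply tr; [exact h1|]. eapply tr; [exact h2|].
    apply inf_lb. exists (thetaA (S m) σ s T). rewrite inst1_sub. reflexivity.
  -
    pose proof (Sup_in B V σ s _ _ H) as h1. simpl in h1.
    destruct (Hsall m (sub σ (upS_S (S m) s) F)) as [_ h2]. simpl in h2.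
    refine (Dinf B _ _ _ _ (tr _ _ _ h2 h1)). intros p [T0 ->].
    assert (Hf : ~ so_free (S m) (S Y) F).
    { intro Hc. apply (H0 (SAll m F)); auto. apply so_free_SAll_eq; auto. }
    rewrite <- (key1 m F Y T0 σ s Hf).
    eapply tr; [apply (Inf_ag B V σ s σ (upd1 s (S m) Y T0))|].
    { intros G HG. apply ag1. apply H0; auto. }
    eapply tr; [apply IHG1LC|]. apply Sup_cons. intros G HG. apply ag1. apply H0; auto.
Qed.

Theorem mainTheorem3 (B : cBa) (Γ Δ : list form) :
  G1LC Γ Δ ->
  forall V : form -> DB B, semi_valuation B V ->
    le B (inf B (fun x => exists A, In A Γ /\ x = Box (V A)))
         (sup B (fun x => exists C, In C Δ /\ x = Dia (V C))).
Proof.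
  intros H V HV.
  pose proof (soundness B V HV Γ Δ H (fun i => i) var_abs) as h.
  assert (Hid : forall A, sub (fun i => i) var_abs A = A) by (intro; apply sub_id; auto).
  eapply le_trans; [|eapply le_trans; [exact h|]].
  - apply inf_greatest. intros x [A [HA ->]]. rewrite Hid. apply inf_lb. eauto.
  - apply sup_least. intros x [A [HA ->]]. rewrite Hid. apply sup_ub. eauto.
Qed.
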